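(* Let $G$ be countably infinite and let $L:G\to[0,\infty)$ be proper. (1) If $G$ has polynomial H-growth with respect to $L$, then there exists $s_0>0$ such that $(G,\sigma)$ is $(1+L)^{s_0}$-decaying for every normalized 2-cocycle $\sigma$ (in particular, if $L$ is a length function, $G$ has the $\sigma$-twisted rapid decay property w.r.t. $L$). (2) If $G$ has subexponential H-growth with respect to $L$, then $(G,\sigma)$ is $a^L$-decaying for every $a>1$ and every normalized 2-cocycle $\sigma$.
   Context: $G$ is a discrete group, $\sigma:G\times G\to\mathbb{T}$ a normalized 2-cocycle ($\sigma(g,h)\sigma(gh,k)=\sigma(h,k)\sigma(g,hk)$, $\sigma(g,e)=\sigma(e,g)=1$), $\Lambda_\sigma(g)$ the unitary on $\ell^2(G)$ with $(\Lambda_\sigma(g)\xi)(h)=\sigma(g,g^{-1}h)\xi(g^{-1}h)$, $\lambda=\Lambda_1$, $C^*_r(G,\sigma)$ the operator-norm closed $*$-algebra generated by $\Lambda_\sigma(G)$. $\mathcal{K}(G)$ = finitely supported functions, $\pi_\sigma(f)=\sum_g f(g)\Lambda_\sigma(g)$, $\pi_\lambda=\pi_1$. A function $L:G\to[0,\infty)$ is proper if $L^{-1}([0,t])$ is finite for all $t\ge0$. For finite nonempty $E\subseteq G$, the Haagerup content is $c(E)=\sup\{\|\pi_\lambda(f)\|\mid f\in\mathcal{K}(G),\ \mathrm{supp}f\subseteq E,\ \|f\|_2=1\}$. With $B_{r,L}=\{g\in G\mid L(g)\le r\}$: $G$ has polynomial H-growth w.r.t. $L$ if there are $K,p>0$ with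 $c(B_{r,L})\le K(1+r)^p$ for all $r\ge0$; $G$ has subexponential H-growth w.r.t. $L$ if for every $b>1$ there is $r_0$ with $c(B_{r,L})<b^r$ for all $r\ge r_0$. For $\kappa:G\to[1,\infty)$, $\|\xi\|_{2,\kappa}=\|\xi\kappa\|_2$; $(G,\sigma)$ is $\kappa$-decaying if $f\mapsto\pi_\sigma(f)$ is bounded from $(\mathcal{K}(G),\|\cdot\|_{2,\kappa})$ to $C^*_r(G,\sigma)$ with operator norm. A length function satisfies $L(e)=0$, $L(g^{-1})=L(g)$, $L(gh)\le L(g)+L(h)$; $G$ has the $\sigma$-twisted rapid decay property w.r.t. a length function $L$ if $(G,\sigma)$ is $(1+L)^{s}$-decaying for some $s>0$. *)

(* Defs.v *)
From HB Require Import structures.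
From mathcomp Require Import all_boot all_order all_algebra.
From mathcomp Require Import all_classical all_reals all_analysis.
From mathcomp Require Import complex.
Set Implicit Arguments. Unset Strict Implicit. Unset Printing Implicit Defensive.
Import Order.TTheory GRing.Theory Num.Theory.
Local Open Scope classical_set_scope.
Local Open Scope ring_scope.

Section Defs.
Variables (R : realType) (G : groupType).
Local Notation C := R[i].

Definition countably_infinite : Prop := exists e : nat -> G, bijective e.

Definition supp (f : G -> C) : set G := [set g | f g != 0].
Definition finsupp (f : G -> C) : Prop := finite_set (supp f).

Definition cocycle (sigma : G -> G -> C) : Prop :=
  [/\ (forall g h, Normc.normc (sigma g h) = 1),
      (forall g h k, sigma g h * sigma (g * h)%g k = sigma h k * sigma g (h * k)%g) &
      (forall g, sigma g 1%g = 1 /\ sigma 1%g g = 1)].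

(* trivial cocycle, giving the left regular representation lambda *)
Definition trivial_cocycle : G -> G -> C := fun _ _ => 1.

Definition l2sq (xi : G -> C) : \bar R :=
  \esum_(g in [set: G]) ((Normc.normc (xi g)) ^+ 2)%:E.
Definition is_l2 (xi : G -> C) : Prop := (l2sq xi < +oo)%E.
Definition l2norm (xi : G -> C) : \bar R :=
  match l2sq xi with
  | EFin r => (Num.sqrt r)%:E
  | _ => +oo%E
  end.

Definition Lambda (sigma : G -> G -> C) (g : G) (xi : G -> C) : G -> C :=
  fun h => sigma g (g^-1 * h)%g * xi (g^-1 * h)%g.

Definition pi (sigma : G -> G -> C) (f : G -> C) (xi : G -> C) : G -> C :=
  fun h => \sum_(g \in supp f) f g * Lambda sigma g xi h.

Definition opnorm (sigma : G -> G -> C) (f : G -> C) : \bar R :=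
  ereal_sup [set l2norm (pi sigma f xi) |
             xi in [set xi | is_l2 xi /\ (l2norm xi <= 1)%E]].

Definition haagerup (E : set G) : \bar R :=
  ereal_sup [set opnorm trivial_cocycle f |
             f in [set f | finsupp f /\ supp f `<=` E /\ l2norm f = 1%E]].

Definition properL (L : G -> R) : Prop :=
  forall t : R, 0 <= t -> finite_set [set g | L g <= t].

Definition ballL (L : G -> R) (r : R) : set G := [set g | L g <= r].

Definition poly_Hgrowth (L : G -> R) : Prop :=
  exists K p : R, [/\ 0 < K, 0 < p &
    forall r : R, 0 <= r -> (haagerup (ballL L r) <= (K * (1 + r) `^ p)%:E)%E].

Definition subexp_Hgrowth (L : G -> R) : Prop :=
  forall b : R, 1 < b -> exists r0 : R,
    forall r : R, r0 <= r -> (haagerup (ballL L r) < (b `^ r)%:E)%E.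

Definition decaying (sigma : G -> G -> C) (kappa : G -> R) : Prop :=
  exists K : R, forall f : G -> C, finsupp f ->
    (opnorm sigma f <= K%:E * l2norm (fun g => (f g * ((kappa g)%:C)%C)%R))%E.

Definition length_function (L : G -> R) : Prop :=
  [/\ L 1%g = 0, (forall g, L g^-1%g = L g) &
      (forall g h, L (g * h)%g <= L g + L h)].

Definition twisted_RD (sigma : G -> G -> C) (L : G -> R) : Prop :=
  exists s : R, 0 < s /\ decaying sigma (fun g => (1 + L g) `^ s).

End Defs.

(* Main.v *)
Require Import Defs.
From HB Require Import structures.
From mathcomp Require Import all_boot all_order all_algebra.
From mathcomp Require Import all_classical all_reals all_analysis.
From mathcomp Require Import complex.
From mathcomp Require Import ring lra.
Import Order.TTheory GRing.Theory Num.Theory.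
Set Implicit Arguments. Unset Strict Implicit. Unset Printing Implicit Defensive.
Local Open Scope classical_set_scope.
Local Open Scope ring_scope.
Section Aux.
Variables (R : realType) (G : groupType).
Local Notation C := R[i].
Local Notation nc := (@Normc.normc R).
Local Open Scope complex_scope.

Lemma normcR (x : R) : 0 <= x -> nc (x%:C) = x.
Proof. by move=> x0; rewrite /Normc.normc /= expr0n /= addr0 sqrtr_sqr ger0_norm. Qed.

Lemma normc_ge0 (x : C) : 0 <= nc x.
Proof. by case: x => a b; rewrite /= sqrtr_ge0. Qed.

Lemma normc_sum (I : Type) (s : seq I) (F : I -> C) :
  nc (\sum_(i <- s) F i) <= \sum_(i <- s) nc (F i).
Proof.
elim: s => [|i s IH]; rewrite ?big_nil ?big_cons ?Normc.normc0 //.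
apply: le_trans (le_normcD _ _) _; by rewrite lerD2l.
Qed.

Lemma l2sq_ge0 (xi : G -> C) : (0 <= l2sq xi)%E.
Proof. by apply: esum_ge0 => i _; rewrite lee_fin exprn_ge0 ?normc_ge0. Qed.

Lemma l2sqE (s : seq G) (xi : G -> C) : uniq s -> (forall g, g \notin s -> xi g = 0) ->
  l2sq xi = (\sum_(g <- s) nc (xi g) ^+ 2)%:E.
Proof.
move=> us xs; rewrite /l2sq.
transitivity (\esum_(g in [set` s]) ((nc (xi g))^+2)%:E)%E.
  rewrite [RHS]esum_mkcond; apply: eq_esum => g _; rewrite mem_setE.
  by case: ifPn => // /xs ->; rewrite Normc.normc0 expr0n.
rewrite esum_fset //; last by move=> i _; rewrite lee_fin exprn_ge0 ?normc_ge0.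
  by rewrite -fsbig_seq // sumEFin.
exact: finite_seq.
Qed.

Lemma piE (sig : G -> G -> C) (f xi : G -> C) (s : seq G) h : uniq s ->
  (forall g, g \notin s -> f g = 0) ->
  Defs.pi sig f xi h = \sum_(g <- s) f g * Lambda sig g xi h.
Proof.
move=> us fs; rewrite /Defs.pi (fsbig_fwiden s) //.
  move=> g /=; rewrite /supp /= => fg; apply: contraNT fg => /fs ->; by rewrite eqxx.
move=> g [_]; rewrite /supp /= => /negP; rewrite negbK => /eqP ->.
by rewrite /preimage /= mul0r.
Qed.

Lemma l2norm_le (v : G -> C) (x : R) : 0 <= x -> (l2sq v <= x%:E)%E ->
  (l2norm v <= (Num.sqrt x)%:E)%E.
Proof.
move=> x0; rewrite /l2norm; have := l2sq_ge0 v.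
case: (l2sq v) => [r| |] //= r0; rewrite !lee_fin => rx.
by rewrite ler_sqrt.
Qed.

Lemma l2sq_le (v : G -> C) (x : R) : 0 <= x -> (l2norm v <= x%:E)%E ->
  (l2sq v <= (x ^+ 2)%:E)%E.
Proof.
move=> x0; rewrite /l2norm; have := l2sq_ge0 v.
case: (l2sq v) => [r| |] //= r0; rewrite !lee_fin => rx.
move: r0; rewrite lee_fin => r0.
by rewrite -(sqr_sqrtr r0) ler_sqr // ?sqrtr_ge0 ?nnegrE ?sqrtr_ge0.
Qed.

Lemma esumZ_le (I : set G) (a : G -> \bar R) (c : R) : (forall i, (0 <= a i)%E) ->
  0 <= c -> (\esum_(i in I) (c%:E * a i) <= c%:E * \esum_(i in I) a i)%E.
Proof.
move=> a0 c0; apply: ge_ereal_sup => _ [X [finX XI]] <-.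
rewrite -ge0_mule_fsumr //; apply: lee_wpmul2l; first by rewrite lee_fin.
by apply: ereal_sup_ubound; exists X.
Qed.

Lemma sum_partition (nu : G -> nat) (s : seq G) (N : nat) (F : G -> R) :
  (forall g, g \in s -> (nu g < N)%N) ->
  \sum_(0 <= n < N) \sum_(g <- s | nu g == n) F g = \sum_(g <- s) F g.
Proof.
move=> hN.
under eq_bigr do rewrite big_mkcond.
rewrite exchange_big /= big_seq [RHS]big_seq; apply: eq_bigr => g gs.
rewrite -big_mkcond /=.
under eq_bigl do rewrite eq_sym.
by rewrite big_nat1_eq /= hN.
Qed.

Lemma cauchy_schwarz (N : nat) (x e : nat -> R) : (forall n, 0 < e n) ->
  (\sum_(0 <= n < N) x n) ^+ 2 <=
  (\sum_(0 <= n < N) e n) * \sum_(0 <= n < N) (x n ^+ 2 / e n).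
Proof.
move=> e0; elim: N => [|N IH]; first by rewrite !big_geq // expr0n /= mul0r.
rewrite !big_nat_recr //=; move: IH.
set X := \sum_(0 <= n < N) x n; set A := \sum_(0 <= n < N) e n.
set B := \sum_(0 <= n < N) (x n ^+ 2 / e n) => IH.
have A0 : 0 <= A by apply: sumr_ge0 => n _; apply: ltW.
have B0 : 0 <= B by apply: sumr_ge0 => n _; rewrite divr_ge0 ?sqr_ge0 // ltW.
have en := e0 N; set y := x N / e N.
have -> : x N = e N * y by rewrite /y mulrC divfK // gt_eqF.
have -> : (e N * y) ^+ 2 / e N = e N * y ^+ 2.
  by field; rewrite gt_eqF.
have h : 2 * X * y <= A * y ^+ 2 + B.
  have h1 : 0 <= A * (A * y ^+ 2 + B - 2 * X * y).
    have q := sqr_ge0 (A * y - X).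
    have -> : A * (A * y ^+ 2 + B - 2 * X * y) = (A * y - X) ^+ 2 + (A * B - X ^+ 2) by ring.
    by apply: addr_ge0 => //; rewrite subr_ge0.
  have [A0'|Apos] := eqVneq A 0.
    have X0 : X = 0 by move: IH; rewrite A0' mul0r; move=> h2; nra.
    rewrite X0 A0'; lra.
  have Ap : 0 < A by rewrite lt_def Apos A0.
  by move: h1; rewrite pmulr_rge0 //; lra.

nra.
Qed.

Lemma decay_gen (sig : G -> G -> C) (kappa : G -> R) (nu : G -> nat)
  (E : nat -> set G) (c e : nat -> R) (S M : R) :
  (forall g h, nc (sig g h) = 1) ->
  (forall g, 0 <= kappa g) ->
  (forall g, E (nu g) g) ->
  (forall n, (haagerup R (E n) <= (c n)%:E)%E) ->
  (forall n, 0 <= c n) -> (forall n, 0 < e n) ->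
  (forall N, \sum_(0 <= n < N) e n <= S) -> 0 <= M ->
  (forall g, c (nu g) ^+ 2 <= M ^+ 2 * e (nu g) * kappa g ^+ 2) ->
  decaying sig kappa.
Proof.
move=> hsig k0 hE hH c0 e0 hS M0 hc.
have S0 : 0 <= S by have := hS 0%N; rewrite big_geq.
exists (Num.sqrt S * M) => f finf.
set s : seq G := finmap.enum_fset (fset_set (supp f)).
have us : uniq s by apply: finmap.fset_uniq.
have fs : forall g, g \notin s -> f g = 0.
  move=> g; rewrite /s (in_fset_set finf) /supp notin_setE /= => /negP.
  by rewrite negbK => /eqP.
set T' := \sum_(g <- s) nc (f g) ^+ 2 * kappa g ^+ 2.
have T'0 : 0 <= T' by apply: sumr_ge0 => g _; rewrite mulr_ge0 ?sqr_ge0.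
have l2fk : l2sq (fun g => f g * (kappa g)%:C) = T'%:E.
  rewrite (l2sqE us); last by move=> g /fs ->; rewrite mul0r.
  by congr (_%:E); apply: eq_bigr => g _; rewrite Normc.normcM normcR // exprMn.
have -> : l2norm (fun g => f g * (kappa g)%:C) = (Num.sqrt T')%:E.
  by rewrite /l2norm l2fk.
rewrite -EFinM; apply: ge_ereal_sup => _ [xi [xil2 xi1] <-].
suff : (l2sq (Defs.pi sig f xi) <= (S * M ^+ 2 * T')%:E)%E.
  move=> h; have X0 : 0 <= S * M ^+ 2 * T' by rewrite !mulr_ge0 ?sqr_ge0.
  apply: le_trans (l2norm_le X0 h) _.
  by rewrite !sqrtrM ?mulr_ge0 ?sqr_ge0 // -expr2 sqr_sqrtr.
set N := (\max_(g <- s) nu g).+1.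
have hN : forall g, g \in s -> (nu g < N)%N.
  by move=> g gs; rewrite ltnS (leq_bigmax_seq _ gs).
set U := fun n h => \sum_(g <- s | nu g == n) nc (f g) * nc (xi (g^-1 * h)%g).
set Tn := fun n => \sum_(g <- s | nu g == n) nc (f g) ^+ 2.
have U0 : forall n h, 0 <= U n h.
  by move=> n h; apply: sumr_ge0 => g _; rewrite mulr_ge0 ?normc_ge0.
have Tn0 : forall n, 0 <= Tn n by move=> n; apply: sumr_ge0 => g _; rewrite sqr_ge0.
have F1 : forall h, nc (Defs.pi sig f xi h) <= \sum_(0 <= n < N) U n h.
  move=> h; rewrite (piE _ _ _ us fs) /U sum_partition //.
  apply: le_trans (normc_sum _ _) _; apply: ler_sum => g _.
  by rewrite /Lambda !Normc.normcM hsig mul1r.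
have F2 : forall n,
    (\esum_(h in [set: G]) ((U n h) ^+ 2)%:E <= (c n ^+ 2 * Tn n)%:E)%E.
  move=> n.
  have [T0|Tpos] := eqVneq (Tn n) 0.
    have fz : forall g, g \in s -> nu g == n -> nc (f g) = 0.
      move=> g gs gn.
      have : nc (f g) ^+ 2 <= Tn n.
        rewrite /Tn big_mkcond (bigD1_seq g) //= gn lerDl.
        by apply: sumr_ge0 => i _; case: ifP => // _; rewrite sqr_ge0.
      rewrite T0 => h; apply/eqP; rewrite -sqrf_eq0 eq_le h sqr_ge0 //.
    rewrite T0 mulr0 esum1 // => h _.
    rewrite /U big_seq_cond big1 ?expr0n //= => g /andP[gs gn]; by rewrite fz // mul0r.
  have Tp : 0 < Tn n by rewrite lt_def Tpos Tn0.
  set t := Num.sqrt (Tn n).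
  have tp : 0 < t by rewrite sqrtr_gt0.
  set gn : G -> C := fun g => if nu g == n then ((nc (f g) / t)%:C) else 0.
  have gns : forall g, g \notin s -> gn g = 0.
    move=> g /fs; rewrite /gn => ->; rewrite Normc.normc0 mul0r; by case: ifP.
  have l2gn : l2norm gn = 1%:E.
    rewrite /l2norm (l2sqE us gns).
    have -> : \sum_(g <- s) nc (gn g) ^+ 2 = 1.
      transitivity (\sum_(g <- s | nu g == n) nc (f g) ^+ 2 / t ^+ 2).
        rewrite [RHS]big_mkcond; apply: eq_bigr => g _; rewrite /gn; case: ifP => _.
          by rewrite normcR ?divr_ge0 ?normc_ge0 ?ltW // expr_div_n.
        by rewrite Normc.normc0 expr0n.
      by rewrite -mulr_suml sqr_sqrtr ?Tn0 // divff // gt_eqF.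
    by rewrite sqrtr1.
  have fgn : finsupp gn.
    apply: (@sub_finite_set _ _ [set` s]); last exact: finite_seq.
    move=> g; rewrite /supp /= => gn0; case: (boolP (g \in s)) => // /gns h.
    by rewrite h eqxx in gn0.
  have sgn : supp gn `<=` E n.
    move=> g; rewrite /supp /= /gn; case: (eqVneq (nu g) n) => [<- _|_]; first exact: hE.
    by rewrite eqxx.
  set xa : G -> C := fun h => (nc (xi h))%:C.
  have l2xa : l2sq xa = l2sq xi.
    by rewrite /l2sq; apply: eq_esum => h _; rewrite normcR ?normc_ge0.
  have l2nxa : l2norm xa = l2norm xi by rewrite /l2norm l2xa.
  have piE' : forall h, Defs.pi (@trivial_cocycle R G) gn xa h = (U n h / t)%:C.
    move=> h; rewrite (piE _ _ _ us gns) /U.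
    rewrite mulr_suml raddf_sum [RHS]big_mkcond /=; apply: eq_bigr => g _.
    rewrite /gn /Lambda /trivial_cocycle /xa; case: ifP => _; last by rewrite mul0r.
    by rewrite mul1r -rmorphM mulrAC.
  have hb : (l2norm (Defs.pi (@trivial_cocycle R G) gn xa) <= (c n)%:E)%E.
    apply: le_trans (hH n).
    apply: (@le_trans _ _ (opnorm (@trivial_cocycle R G) gn)).
      by apply: ereal_sup_ubound; exists xa => //; split; rewrite /is_l2 ?l2xa ?l2nxa.
    by apply: ereal_sup_ubound; exists gn.
  have := l2sq_le (c0 n) hb.
  have -> : l2sq (Defs.pi (@trivial_cocycle R G) gn xa) =
      \esum_(h in [set: G]) ((U n h / t) ^+ 2)%:E.
    by rewrite /l2sq; apply: eq_esum => h _; rewrite piE' normcR // divr_ge0 ?U0 ?ltW.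
  move=> hle.
  apply: (@le_trans _ _ ((t ^+ 2)%:E * \esum_(h in [set: G]) ((U n h / t) ^+ 2)%:E)%E).
    apply: le_trans (esumZ_le _ _ _); first last.
    - by rewrite sqr_ge0.
    - by move=> h; rewrite lee_fin sqr_ge0.
    rewrite le_eqVlt; apply/orP; left; apply/eqP; apply: eq_esum => h _.
    rewrite -EFinM; congr (_%:E).
    by rewrite expr_div_n mulrCA divff ?mulr1 // sqrf_eq0 gt_eqF.
  rewrite -[Tn n](sqr_sqrtr (Tn0 n)) -/t mulrC EFinM.
  by apply: (lee_wpmul2l _ hle); rewrite lee_fin sqr_ge0.
have F4 : \sum_(0 <= n < N) (c n ^+ 2 / e n * Tn n) <= M ^+ 2 * T'.
  apply: (@le_trans _ _ (\sum_(0 <= n < N) \sum_(g <- s | nu g == n)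
       (c (nu g) ^+ 2 / e (nu g) * nc (f g) ^+ 2))).
    rewrite le_eqVlt; apply/orP; left; apply/eqP; apply: eq_bigr => n _.
    by rewrite /Tn mulr_sumr; apply: eq_bigr => g /eqP ->.
  rewrite sum_partition // /T' mulr_sumr; apply: ler_sum => g _.
  have h1 : c (nu g) ^+ 2 / e (nu g) <= M ^+ 2 * kappa g ^+ 2.
    rewrite ler_pdivrMr //; apply: le_trans (hc g) _.
    by rewrite le_eqVlt; apply/orP; left; apply/eqP; ring.
  apply: le_trans (ler_wpM2r (sqr_ge0 (nc (f g))) h1) _.
  by rewrite le_eqVlt; apply/orP; left; apply/eqP; ring.
apply: (@le_trans _ _ (\esum_(h in [set: G])
     (\sum_(0 <= n < N) ((S / e n) * (U n h) ^+ 2)%:E))%E).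
  apply: le_esum => h _; rewrite sumEFin lee_fin.
  apply: (@le_trans _ _ ((\sum_(0 <= n < N) U n h) ^+ 2)).
    by rewrite ler_sqr ?nnegrE ?normc_ge0 ?sumr_ge0 // => n _.
  apply: le_trans (cauchy_schwarz _ _ e0) _.
  apply: (@le_trans _ _ (S * \sum_(0 <= n < N) U n h ^+ 2 / e n)).
    by rewrite ler_wpM2r ?hS // sumr_ge0 // => n _; rewrite divr_ge0 ?sqr_ge0 ?ltW.
  by rewrite mulr_sumr; apply: ler_sum => n _; rewrite le_eqVlt; apply/orP; left; apply/eqP; ring.
rewrite esum_sum; last by move=> h n _ _; rewrite lee_fin mulr_ge0 ?sqr_ge0 ?divr_ge0 ?(ltW (e0 n)).
apply: (@le_trans _ _ (\sum_(0 <= n < N) ((S / e n) * (c n ^+ 2 * Tn n))%:E)%E).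
  apply: lee_sum => n _.
  under eq_esum do rewrite EFinM.
  apply: le_trans (esumZ_le _ _ _) _.
  - by move=> h; rewrite lee_fin sqr_ge0.
  - by rewrite divr_ge0 ?(ltW (e0 n)).
  by rewrite EFinM; apply: (lee_wpmul2l _ (F2 n)); rewrite lee_fin divr_ge0 ?(ltW (e0 n)).
rewrite sumEFin lee_fin -mulrA.
apply: le_trans (ler_wpM2l S0 F4); rewrite mulr_sumr le_eqVlt; apply/orP; left; apply/eqP.
by apply: eq_bigr => n _; ring.
Qed.
End Aux.

Section R.
Variable R : realType.
Lemma hc_aux (c d e M k : R) : 0 <= c -> 0 <= d -> 0 < e -> 1 <= d ^+ 2 * e ->
  c * d <= M * k -> c ^+ 2 <= M ^+ 2 * e * k ^+ 2.
Proof.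
move=> c0 d0 e0 h1 h2.
have h3 : c ^+ 2 <= c ^+ 2 * (d ^+ 2 * e).
  by rewrite ler_peMr // sqr_ge0.
apply: le_trans h3 _.
have h4 : (c * d) ^+ 2 <= (M * k) ^+ 2.
  have cd0 : 0 <= c * d by rewrite mulr_ge0.
  rewrite !expr2; nra.
have -> : c ^+ 2 * (d ^+ 2 * e) = (c * d) ^+ 2 * e by ring.
have -> : M ^+ 2 * e * k ^+ 2 = (M * k) ^+ 2 * e by ring.
by rewrite ler_wpM2r // ltW.
Qed.

Lemma hc2 (Q Qn am k a B : R) : 0 <= Q -> Q <= 1 -> Q <= Qn -> 0 <= am -> am <= k ->
  0 <= a -> 1 <= B -> (Q * (a * am)) ^+ 2 <= (a * B) ^+ 2 * Qn * k ^+ 2.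
Proof.
move=> Q0 Q1 QQ am0 amk a0 B1.
have k0 : 0 <= k by apply: le_trans amk.
have h1 : (Q * (a * am)) ^+ 2 <= (Q * (a * k)) ^+ 2.
  by rewrite ler_sqr ?nnegrE ?mulr_ge0 // ler_wpM2l // ler_wpM2l.
apply: le_trans h1 _.
have -> : (Q * (a * k)) ^+ 2 = Q ^+ 2 * ((a * k) ^+ 2) by ring.
have -> : (a * B) ^+ 2 * Qn * k ^+ 2 = (Qn * B ^+ 2) * ((a * k) ^+ 2) by ring.
apply: ler_wpM2r; first exact: sqr_ge0.
have : Q ^+ 2 <= Qn by rewrite expr2; nra.
have : 1 <= B ^+ 2 by rewrite expr2; nra.
have : 0 <= Qn by lra.
nra.
Qed.

Lemma sum_tele (N : nat) :
  \sum_(0 <= n < N) ((n.+1)%:R * (n.+2)%:R)^-1 = 1 - (N.+1%:R)^-1 :> R.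
Proof.
elim: N => [|N IH]; first by rewrite big_geq // invr1 subrr.
rewrite big_nat_recr //= IH.
have h1 : (N.+1%:R : R) != 0 by rewrite pnatr_eq0.
have h2 : (N.+2%:R : R) != 0 by rewrite pnatr_eq0.
have -> : (N.+2%:R : R) = N.+1%:R + 1 by rewrite natr1.
have h3 : (N.+1%:R + 1 : R) != 0 by rewrite natr1 pnatr_eq0.
field; have hN := ler0n R N; by rewrite !gt_eqF //; lra.
Qed.

Lemma sum_geom (q : R) (N : nat) :
  (\sum_(0 <= n < N) q ^+ n) * (1 - q) = 1 - q ^+ N.
Proof.
elim: N => [|N IH]; first by rewrite big_geq // mul0r expr0 subrr.
by rewrite big_nat_recr //= mulrDl IH exprSr; ring.
Qed.
End R.


Theorem theorem3p13 (R : realType) (G : groupType) (L : G -> R) :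
  countably_infinite G -> (forall g, 0 <= L g) -> properL L ->
  (poly_Hgrowth L ->
     exists s0 : R, 0 < s0 /\
       (forall sigma : G -> G -> R[i], cocycle sigma ->
          decaying sigma (fun g => (1 + L g) `^ s0)) /\
       (length_function L ->
          forall sigma : G -> G -> R[i], cocycle sigma -> twisted_RD sigma L))
  /\
  (subexp_Hgrowth L ->
     forall a : R, 1 < a ->
       forall sigma : G -> G -> R[i], cocycle sigma ->
         decaying sigma (fun g => a `^ L g)).
Proof.
move=> _ L0 _; split.
  move=> [K [p [K0 p0 hK]]].
  have dec : forall sigma : G -> G -> R[i], cocycle sigma ->
      decaying sigma (fun g => (1 + L g) `^ (p + 1)).
    move=> sigma [hs _ _].
    pose nu := fun g => (Num.truncn (L g)).+1.
    apply: (@decay_gen R G sigma _ nu (fun n => ballL L n%:R)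
      (fun n => K * (1 + n%:R) `^ p) (fun n => ((n.+1)%:R * (n.+2)%:R)^-1) 1
      (3 * K * 2 `^ p)).
    - exact: hs.
    - by move=> g; apply: powR_ge0.
    - by move=> g; rewrite /ballL /nu /=; apply/ltW/truncnS_gt.
    - by move=> n; apply: hK; exact: ler0n.
    - by move=> n; rewrite mulr_ge0 ?powR_ge0 // ltW.
    - by move=> n; rewrite invr_gt0 mulr_gt0 ?ltr0Sn.
    - move=> N; rewrite sum_tele.
      have h : 0 <= (N.+1%:R : R)^-1 by rewrite invr_ge0 ler0n.
      by rewrite gerBl.
    - by rewrite !mulr_ge0 ?powR_ge0 // ltW.
    move=> g; rewrite /nu; set x := L g; set m := Num.truncn x.
    have x0 : 0 <= x := L0 g.
    have mx : m%:R <= x by rewrite truncn_le.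
    apply: (@hc_aux R _ (m.+3)%:R).
    - by rewrite mulr_ge0 ?powR_ge0 // ltW.
    - exact: ler0n.
    - by rewrite invr_gt0 mulr_gt0 ?ltr0Sn.
    - have -> : (m.+3%:R : R) ^+ 2 * (m.+2%:R * m.+3%:R)^-1 = m.+3%:R / m.+2%:R.
        field; have hm := ler0n R m; by rewrite !gt_eqF //; lra.
      by rewrite ler_pdivlMr ?ltr0Sn // mul1r ler_nat.
    have h1 : (1 + m.+1%:R) `^ p <= 2 `^ p * (1 + x) `^ p.
      rewrite -powRM; [|lra|lra].
      apply: ge0_ler_powR.
      - exact: ltW.
      - by rewrite nnegrE addr_ge0 ?ler0n.
      - by rewrite nnegrE; lra.
      - by rewrite -natr1; lra.
    have h2 : (m.+3%:R : R) <= 3 * (1 + x).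
      by rewrite -[m.+3]addn3 natrD; lra.
    rewrite powRD; last by apply/implyP => _; rewrite gt_eqF //; lra.
    rewrite powRr1; last lra.
    have -> : 3 * K * 2 `^ p * ((1 + x) `^ p * (1 + x)) =
      K * (2 `^ p * (1 + x) `^ p) * (3 * (1 + x)) by ring.
    apply: ler_pM => //.
    - by rewrite mulr_ge0 ?powR_ge0 // ltW.
    - by apply: ler_wpM2l => //; exact: ltW.
  exists (p + 1); split; first lra.
  split; first exact: dec.
  move=> _ sigma hsig; exists (p + 1); split; first lra.
  exact: dec sigma hsig.
move=> hsub a a1 sigma [hs _ _].
set b := (1 + a) / 2.
have b1 : 1 < b by rewrite /b; lra.
have ba : b < a by rewrite /b; lra.
have [r0 hr0] := hsub b b1.
set N0 := (Num.truncn (Num.max r0 0)).+1.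
have hN0 : r0 <= N0%:R.
  apply: (@le_trans _ _ (Num.max r0 0)); first by rewrite le_max lexx.
  exact/ltW/truncnS_gt.
have a0 : 0 < a by lra.
set q := b / a.
have q0 : 0 < q by rewrite divr_gt0 //; lra.
have q1 : q < 1 by rewrite ltr_pdivrMr // mul1r.
have bq : b = q * a by rewrite /q divfK // gt_eqF.
pose nu := fun g => if L g <= N0%:R then 0%N else ((Num.truncn (L g)) - N0).+1.
apply: (@decay_gen R G sigma _ nu (fun n => ballL L (N0 + n)%:R)
  (fun n => b ^+ (N0 + n)) (fun n => q ^+ n) (1 - q)^-1 (a * b ^+ N0)).
- exact: hs.
- by move=> g; apply: powR_ge0.
- move=> g; rewrite /ballL /nu /=; case: ifP => hL; first by rewrite addn0.
  have hm : (N0 <= Num.truncn (L g))%N.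
    by rewrite truncn_ge_nat // ltW // ltNge hL.
  by rewrite addnS subnKC //; apply/ltW/truncnS_gt.
- move=> n; apply: ltW; rewrite -powR_mulrn; last lra.
  apply: hr0; apply: le_trans hN0 _; by rewrite ler_nat leq_addr.
- by move=> n; rewrite exprn_ge0 //; lra.
- by move=> n; rewrite exprn_gt0.
- move=> N; have h := sum_geom q N.
  have q1' : 0 < 1 - q by lra.
  rewrite -[(1 - q)^-1]mul1r ler_pdivlMr // h gerBl exprn_ge0 //; lra.
- by rewrite mulr_ge0 ?exprn_ge0 //; lra.
move=> g; rewrite /nu; case: ifP => hL.
  rewrite addn0 expr0 mulr1.
  have k1 : 1 <= a `^ L g by rewrite -(powRr0 a) ler_powR //; lra.
  have B0 : 0 <= b ^+ N0 by rewrite exprn_ge0 //; lra.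
  move: (b ^+ N0) B0 (a `^ L g) k1 => B B0 k k1.
  rewrite exprMn.
  have : 1 <= a ^+ 2 by rewrite expr2; nra.
  have : 1 <= k ^+ 2 by rewrite expr2; nra.
  have : 0 <= B ^+ 2 by rewrite sqr_ge0.
  move: (B ^+ 2) (k ^+ 2) (a ^+ 2) => X Y Z X0 Y1 Z1.
  have h : X <= Z * X by rewrite ler_peMl.
  apply: le_trans h _; rewrite ler_peMr // mulr_ge0 //; lra.
set m := Num.truncn (L g).
have hm : (N0 <= m)%N by rewrite truncn_ge_nat // ltW // ltNge hL.
have hb : b ^+ m.+1 = q ^+ m.+1 * (a * a ^+ m) by rewrite bq exprMn [a ^+ _.+1]exprS.
rewrite addnS subnKC // hb.
apply: hc2.
- by rewrite exprn_ge0 // ltW.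
- by rewrite exprn_ile1 // ltW.
- by apply: ler_wiXn2l; rewrite ?ltW // ltnS leq_subr.
- by rewrite exprn_ge0 // ltW.
- rewrite -powR_mulrn; last exact: ltW.
  by apply: ler_powR; [exact: ltW | rewrite truncn_le].
- exact: ltW.
- by rewrite exprn_ege1 // ltW.
Qed.
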